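(* Let $\mathbf{R}$ be a real closed field, $\mathbf{C}=\mathbf{R}(\sqrt{-1})$, and let $(\mathcal{A},* )$ be a $(\mathbf{C},* )$-algebra. Let $n$ be a positive integer and equip $M_n(\mathcal{A})$ with the involution $(a_{ij})^*=(a_{ji}^* )$. Then $(\mathcal{A},* )$ is real reduced if and only if $(M_n(\mathcal{A}),* )$ is real reduced.
   Context: A $*$-ring is an associative unital ring with an involution $*$ satisfying $(a+b)^*=a^*+b^*$, $(ab)^*=b^*a^*$, $(a^* )^*=a$. The field $\mathbf{C}$ carries the conjugation involution over $\mathbf{R}$ ($\sqrt{-1}\mapsto-\sqrt{-1}$). A $(\mathbf{C},* )$-algebra is a $*$-ring $(\mathcal{A},* )$ together with a $*$-homomorphism $\mathbf{C}\to\mathcal{A}$ whose image lies in the center of $\mathcal{A}$. A $*$-ring $(\mathcal{A},* )$ is real reduced if for any finitely many $a_1,\dots,a_k\in\mathcal{A}$, $\sum_i a_i^*a_i=0$ implies $a_i=0$ for all $i$. *)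

(* Defs.v *)
From HB Require Import structures.
From mathcomp Require Import all_boot all_order all_algebra.
From mathcomp Require Import complex.
Set Implicit Arguments. Unset Strict Implicit. Unset Printing Implicit Defensive.
Import Order.TTheory GRing.Theory Num.Theory.
Local Open Scope ring_scope.

Definition is_star_ring (A : pzRingType) (s : A -> A) : Prop :=
  (forall a b : A, s (a + b) = s a + s b) /\
  (forall a b : A, s (a * b) = s b * s a) /\
  (forall a : A, s (s a) = a).

Definition is_C_star_algebra (R : rcfType) (A : pzRingType) (s : A -> A)
  (phi : {rmorphism R[i] -> A}) : Prop :=
  is_star_ring s /\
  (forall z : R[i], phi (conjc z) = s (phi z)) /\
  (forall (z : R[i]) (a : A), phi z * a = a * phi z).

Definition real_reduced (T : nmodType) (mul : T -> T -> T) (s : T -> T) : Prop :=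
  forall (k : nat) (a : 'I_k -> T),
    \sum_(i < k) mul (s (a i)) (a i) = 0 -> forall i, a i = 0.

Definition mx_star (A : pzRingType) (s : A -> A) (n : nat) (M : 'M[A]_n) : 'M[A]_n :=
  \matrix_(i, j) s (M j i).

(* Main.v *)
Require Import Defs.
From mathcomp Require Import all_boot all_order all_algebra.
From mathcomp Require Import complex.
Local Open Scope ring_scope.
Import GRing.Theory.

Lemma rr_fin (A : pzRingType) (s : A -> A) (I : finType) (a : I -> A) :
  real_reduced ( *%R : A -> A -> A) s ->
  \sum_(i : I) s (a i) * a i = 0 -> forall i, a i = 0.
Proof.
move=> rr H i.
have H' : \sum_(j < #|I|) s (a (enum_val j)) * a (enum_val j) = 0.
  rewrite -[RHS]H [RHS](reindex (@enum_val I (mem predT))) //=.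
  by exists enum_rank => x _; rewrite ?enum_valK ?enum_rankK.
have := rr _ _ H' (enum_rank i).
by rewrite enum_rankK.
Qed.

Theorem lemma7 (R : rcfType) (A : pzRingType) (s : A -> A)
  (phi : {rmorphism R[i] -> A}) (n : nat) :
  is_C_star_algebra s phi -> (0 < n)%N ->
  (real_reduced ( *%R : A -> A -> A) s <->
   real_reduced (@mulmx A n n n) (@mx_star A s n)).
Proof.
move=> [[sD [sM sK]] _] hn.
have s0 : s 0 = 0.
  have := sD 0 0; rewrite addr0 => /(congr1 (fun x => x - s 0)).
  by rewrite subrr addrK.
split.
- move=> rr k M HM i; apply/matrixP => p q; rewrite mxE.
  have Hq : \sum_(x : 'I_k * 'I_n) s (M x.1 x.2 q) * M x.1 x.2 q = 0.
    have := congr1 (fun X : 'M[A]_n => X q q) HM.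
    rewrite summxE mxE /= => HQ; rewrite -[RHS]HQ.
    transitivity (\sum_(x < k) \sum_(y < n) s (M x y q) * M x y q).
      by rewrite pair_bigA.
    apply: eq_bigr => x _; rewrite !mxE; apply: eq_bigr => y _.
    by rewrite /mx_star mxE.
  exact: (@rr_fin A s _ (fun x : 'I_k * 'I_n => M x.1 x.2 q) rr Hq (i, p)).
- move=> rr k a Ha i.
  pose o := Ordinal hn.
  pose M j := \matrix_(p, q) (if (p == o) && (q == o) then a j else 0) : 'M[A]_n.
  have E : forall j p q, (mx_star s (M j) *m M j) p q =
      if (p == o) && (q == o) then s (a j) * a j else 0.
    move=> j p q; rewrite mxE (bigD1 o) //= big1 ?addr0.
      rewrite /mx_star !mxE eqxx /=.
      by case: (p == o); case: (q == o) => /=; rewrite ?s0 ?mulr0 ?mul0r.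
    move=> l /negPf hl; rewrite /mx_star !mxE hl /=.
    by rewrite mulr0.
  have HM : \sum_(j < k) (mx_star s (M j) *m M j) = 0.
    apply/matrixP => p q; rewrite summxE mxE.
    under eq_bigr do rewrite E.
    case: ((p == o) && (q == o)) => //.
    by rewrite big1.
  have := congr1 (fun X : 'M[A]_n => X o o) (rr k M HM i).
  by rewrite !mxE eqxx.
Qed.
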